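(* Let $q$ and $p_0,p_1,\dots,p_N$ be palindromic Laurent polynomials in $\mathbb{R}[t,t^{-1}]$ with $q=\sum_{\ell=0}^{N}p_\ell t^\ell$, and assume that for every $\ell>0$ all coefficients of $p_\ell$ are non-negative. Then $p_\ell=0$ for all $\ell>0$; in particular $q=p_0$.
   Context: A Laurent polynomial $p\in\mathbb{R}[t,t^{-1}]$ is palindromic if $p(t)=p(t^{-1})$. *)

(* Defs.v *)
(* A real Laurent polynomial in R[t,t^-1] is represented by its
   coefficient function c : int -> R (c k = coefficient of t^k), required to
   have finite support. *)
From mathcomp Require Import all_boot all_order all_algebra.
From mathcomp Require Import reals.
Set Implicit Arguments. Unset Strict Implicit. Unset Printing Implicit Defensive.
Import Order.TTheory GRing.Theory Num.Theory.
Local Open Scope ring_scope.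

Definition is_laurent (R : realType) (c : int -> R) : Prop :=
  exists n : nat, forall k : int, n%:Z < `|k| -> c k = 0.

(* palindromic: p(t) = p(t^-1), i.e. coefficient of t^k equals that of t^-k *)
Definition palindromic (R : realType) (c : int -> R) : Prop :=
  forall k : int, c (- k) = c k.

(* coefficients of p * t^l *)
Definition shiftL (R : realType) (c : int -> R) (l : nat) : int -> R :=
  fun k => c (k - l%:Z).

(* coefficients of \sum_{l=0}^N p_l t^l *)
Definition sum_shift (R : realType) (p : nat -> int -> R) (N : nat) : int -> R :=
  fun k => \sum_(l < N.+1) shiftL (p l) l k.

(* Main.v *)
Require Import Defs.
From mathcomp Require Import all_boot all_order all_algebra.
From mathcomp Require Import reals zify.
Set Implicit Arguments. Unset Strict Implicit.
Import Order.TTheory GRing.Theory Num.Theory.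
Local Open Scope ring_scope.

Definition Sw (R : realType) (M : nat) (f : int -> R) :=
  \sum_(i < (M.*2).+1) f (i%:Z - M%:Z).

Lemma shift1 (R : realType) M (f : int -> R) :
  f (- (M%:Z) - 1) = 0 -> f M%:Z = 0 -> Sw M (fun k => f (k - 1)) = Sw M f.
Proof.
move=> h1 h2; rewrite /Sw big_ord_recl big_ord_recr /=.
have -> : (0%:Z - M%:Z - 1) = - M%:Z - 1 by lia.
have -> : ((M.*2)%:Z - M%:Z) = M%:Z by lia.
rewrite h1 h2 add0r addr0; apply: eq_bigr => i _.
congr f; rewrite /bump /=; lia.
Qed.

Lemma shiftl (R : realType) B M (f : int -> R) (l : nat) :
  (forall k, B%:Z < `|k| -> f k = 0) -> (B + l < M)%N ->
  Sw M (fun k => f (k - l%:Z)) = Sw M f.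
Proof.
move=> hf; elim: l => [|l IH] hl.
  by apply: eq_bigr => i _; rewrite subr0.
rewrite -IH; last lia.
rewrite -(shift1 (f := fun k => f (k - l%:Z))).
- by apply: eq_bigr => i _; congr f; lia.
- apply: hf; lia.
- apply: hf; lia.
Qed.

Lemma moment0 (R : realType) M (c : int -> R) :
  palindromic c -> Sw M (fun k => k%:~R * c k) = 0.
Proof.
move=> hc; set S := Sw _ _.
have : S = - S.
  rewrite /S /Sw {1}(reindex_inj rev_ord_inj) /= -sumrN; apply: eq_bigr => i _.
  have key : forall j, (j <= M.*2)%N -> ((M.*2 - j)%N%:Z - M%:Z = - (j%:Z - M%:Z)).
    by move=> j; rewrite -addnn; lia.
  rewrite subSS key; last by rewrite -ltnS.
  by rewrite hc rmorphN mulNr.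
move/eqP; rewrite -subr_eq0 opprK -mulr2n mulrn_eq0 /= => /eqP //.
Qed.

Lemma common_bound (R : realType) (N : nat) (P : nat -> int -> R) :
  (forall l, (l <= N)%N -> exists n : nat, forall k : int, n%:Z < `|k| -> P l k = 0) ->
  exists n : nat, forall l, (l <= N)%N -> forall k : int, n%:Z < `|k| -> P l k = 0.
Proof.
elim: N => [|N IH] h.
  have [n hn] := h 0%N (leqnn 0); exists n => l; rewrite leqn0 => /eqP -> //.
have [n1 hn1] := IH (fun l hl => h l (leqW hl)).
have [n2 hn2] := h N.+1 (leqnn _).
exists (maxn n1 n2) => l hl k hk.
have := hl; rewrite leq_eqVlt => /orP [/eqP -> | hl'].
  apply: hn2; lia.
apply: hn1; [lia | lia].
Qed.
Theorem lemma6p4 (R : realType) (N : nat) (q : int -> R) (p : nat -> int -> R) :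
  is_laurent q -> palindromic q ->
  (forall l, (l <= N)%N -> is_laurent (p l) /\ palindromic (p l)) ->
  (forall k, q k = sum_shift p N k) ->
  (forall l, (0 < l <= N)%N -> forall k, 0 <= p l k) ->
  (forall l, (0 < l <= N)%N -> forall k, p l k = 0) /\ (forall k, q k = p 0%N k).
Proof.
move=> hqL hqP hp hsum hnn.
have [B hB] := common_bound (P := p) (fun l hl => (hp l hl).1).
pose M := (B + N).+1.
have hshift : forall l, (l <= N)%N ->
    Sw M (fun k => k%:~R * shiftL (p l) l k) = l%:R * Sw M (p l).
  move=> l hl; pose g := fun k : int => (k + l%:Z)%:~R * p l k.
  have e : Sw M (fun k => k%:~R * shiftL (p l) l k) = Sw M (fun k => g (k - l%:Z)).
    by apply: eq_bigr => i _; rewrite /g /shiftL subrK.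
  rewrite e (shiftl (B := B)); first last.
  - rewrite /M; lia.
  - by move=> k hk; rewrite /g (hB l hl k hk) mulr0.
  rewrite /g /Sw; under eq_bigr do rewrite intrD mulrDl.
  rewrite big_split /=.
  have := moment0 M (hp l hl).2; rewrite /Sw => ->.
  by rewrite add0r mulr_sumr.
have h0 : \sum_(l < N.+1) l%:R * Sw M (p l) = 0.
  rewrite -[RHS](moment0 M hqP).
  transitivity (\sum_(l < N.+1) Sw M (fun k => k%:~R * shiftL (p l) l k)).
    by apply: eq_bigr => l _; rewrite hshift // -ltnS.
  rewrite /Sw exchange_big; apply: eq_bigr => i _.
  by rewrite hsum /sum_shift mulr_sumr.
have hnn' : forall l : 'I_N.+1, true -> 0 <= l%:R * Sw M (p l).
  move=> l _; case: (posnP l) => [->|lp]; first by rewrite mul0r.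
  apply: mulr_ge0; first exact: ler0n.
  apply: sumr_ge0 => i _; apply: hnn; rewrite lp /= -ltnS; exact: ltn_ord.
have hz := psumr_eq0P hnn' h0.
have part1 : forall l, (0 < l <= N)%N -> forall k, p l k = 0.
  move=> l /andP[l0 lN] k.
  have lN' : (l < N.+1)%N by [].
  have := hz (Ordinal lN') isT; move/eqP; rewrite mulf_eq0 pnatr_eq0 /=.
  rewrite (negbTE (lt0n_neq0 l0)) /= => /eqP hS.
  have hi := psumr_eq0P (fun i _ => hnn l (introT andP (conj l0 lN)) _) hS.
  case: (boolP (B%:Z < `|k|)) => hk; first by apply: hB.
  have hk' : (absz k <= B)%N by rewrite -lez_nat abszE leNgt.
  have hkM : (absz (k + M%:Z)%R < (M.*2).+1)%N by rewrite -addnn /M; lia.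
  have := hi (Ordinal hkM) isT => /=.
  have -> : (absz (k + M%:Z)%R)%:Z - M%:Z = k.
    rewrite /M; clear -hk'; lia.
  by [].
split => // k.
rewrite hsum /sum_shift big_ord_recl /= /shiftL subr0 big1 ?addr0 // => i _.
apply: part1; have := ltn_ord i; rewrite /bump /=; lia.
Qed.
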